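(* Let $Q$ be a quantity space over a field $K$ and let $\mathsf{C}\in Q/{\sim}$. Then $\mathsf{C}$, with addition defined by $x+y=(\rho+\sigma)\cdot u$ whenever $u$ is a unit quantity for $\mathsf{C}$, $x=\rho\cdot u$ and $y=\sigma\cdot u$, and with scalar multiplication $(\lambda,x)\mapsto\lambda\cdot x$ inherited from $Q$, is a one-dimensional vector space over $K$.
   Context: A scalable monoid over a (unital, associative) ring $R$ is a monoid $X$ (identity $1_X$, product written $xy$) together with a map $R\times X\to X$, $(\alpha,x)\mapsto\alpha\cdot x$, such that $1\cdot x=x$, $\alpha\cdot(\beta\cdot x)=\alpha\beta\cdot x$ and $\alpha\cdot(xy)=(\alpha\cdot x)y=x(\alpha\cdot y)$. A quantity space over a field $K$ is a commutative scalable monoid $Q$ over $K$ for which there exists a basis, i.e. a finite set $\{e_1,\ldots,e_n\}$ of invertible elements of $Q$ such that every $x\in Q$ has a unique expansion $x=\mu\cdot\prod_{i=1}^n e_i^{k_i}$ with $\mu\in K$ and $k_i\in\mathbb{Z}$. On $Q$, $x\sim y$ iff $\alpha\cdot x=\beta\cdot y$ for some $\alpha,\beta\in K$; $Q/{\sim}$ is the set of equivalence classes (dimensions). A unit quantity for a class $\mathsf{C}$ is some $u\in\mathsf{C}$ such that every $x\in\mathsf{C}$ equals $\lambda\cdot u$ for some $\lambda\in K$, and $\lambda\cdot u=\lambda'\cdot u$ implies $\lambda=\lambda'$. (The sum $x+y$ so defined does not depend on the choice of unit quantity $u$.) *)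

(* Defs.v *)
From mathcomp Require Import all_boot all_order all_algebra.
Set Implicit Arguments. Unset Strict Implicit. Unset Printing Implicit Defensive.
Import GRing.Theory.
Local Open Scope ring_scope.

Section QS.
Variable K : nzRingType.
Variable X : Type.
Variables (mul : X -> X -> X) (one : X) (scale : K -> X -> X).

Definition scalable_monoid : Prop :=
  (forall x y z, mul x (mul y z) = mul (mul x y) z) /\
  (forall x, mul one x = x) /\
  (forall x, mul x one = x) /\
  (forall x, scale 1 x = x) /\
  (forall a b x, scale a (scale b x) = scale (a * b) x) /\
  (forall a x y, scale a (mul x y) = mul (scale a x) y) /\
  (forall a x y, scale a (mul x y) = mul x (scale a y)).

Definition zpow (e einv : X) (k : int) : X :=
  match k with
  | Posz n => iter n (mul e) one
  | Negz n => iter n.+1 (mul einv) one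
  end.

Definition quantity_space : Prop :=
  [/\ scalable_monoid,
      (forall x y, mul x y = mul y x) &
      exists (n : nat) (e einv : 'I_n -> X),
        (forall i, mul (e i) (einv i) = one) /\
        forall x : X, exists! p : K * {ffun 'I_n -> int},
          x = scale p.1 (\big[mul/one]_(i < n) zpow (e i) (einv i) (p.2 i))].

Definition qsim (x y : X) : Prop := exists a b : K, scale a x = scale b y.

Definition qclass (c : X) : X -> Prop := fun x => qsim x c.

Definition unit_quantity (C : X -> Prop) (u : X) : Prop :=
  [/\ C u,
      (forall x, C x -> exists l : K, x = scale l u) &
      (forall l l' : K, scale l u = scale l' u -> l = l')].

Definition class_add_spec (C : X -> Prop) (add : X -> X -> X) : Prop :=
  forall u, unit_quantity C u -> forall rho sigma : K,
    add (scale rho u) (scale sigma u) = scale (rho + sigma) u.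

Definition vector_space_on (P : X -> Prop) (add : X -> X -> X) : Prop :=
  (forall x y, P x -> P y -> P (add x y)) /\
  (forall a x, P x -> P (scale a x)) /\
  (forall x y z, P x -> P y -> P z -> add x (add y z) = add (add x y) z) /\
  (forall x y, P x -> P y -> add x y = add y x) /\
  (exists z, [/\ P z, (forall x, P x -> add z x = x) &
               (forall x, P x -> exists y, P y /\ add x y = z)]) /\
  (forall x, P x -> scale 1 x = x) /\
  (forall a b x, P x -> scale a (scale b x) = scale (a * b) x) /\
  (forall a x y, P x -> P y -> scale a (add x y) = add (scale a x) (scale a y)) /\
  (forall a b x, P x -> scale (a + b) x = add (scale a x) (scale b x)).

Definition one_dimensional_on (P : X -> Prop) : Prop :=
  exists v, P v /\ forall x, P x -> exists! l : K, x = scale l v.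

End QS.

(* Main.v *)
Require Import Defs.
From mathcomp Require Import all_boot all_order all_algebra.
From Stdlib Require Import ClassicalEpsilon.
Local Open Scope ring_scope.
Import GRing.Theory.

Lemma core (K : fieldType) (Q : Type) (scale : K -> Q -> Q) (m : Q)
  (Hss : forall a b x, scale a (scale b x) = scale (a * b) x)
  (H1 : forall x, scale 1 x = x)
  (Hinj : forall l l', scale l m = scale l' m -> l = l')
  (C : Q -> Prop) (HC : forall x, C x <-> exists l, x = scale l m) :
  (exists add : Q -> Q -> Q, class_add_spec scale C add) /\
  (forall add : Q -> Q -> Q, class_add_spec scale C add ->
     vector_space_on scale C add /\ one_dimensional_on scale C).
Proof.
have Cm : forall l, C (scale l m) by move=> l; apply/HC; exists l.
have mU : unit_quantity scale C m.
  split; [by rewrite -(H1 m); apply: Cm | by move=> x /HC | exact: Hinj].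
have uq : forall u, unit_quantity scale C u -> exists t, t != 0 /\ u = scale t m.
  move=> u [Cu _ Hu]; have [t Et] := (proj1 (HC u) Cu); rewrite Et in Hu *; exists t; split=> //.
  apply/eqP=> t0; have := Hu 0 1; rewrite !Hss t0 !mulr0 => /(_ erefl).
  by move/eqP; rewrite eq_sym oner_eq0.
set coef := fun x => epsilon (inhabits (0 : K)) (fun l => x = scale l m).
have coefE : forall l, coef (scale l m) = l.
  move=> l; apply: Hinj; symmetry.
  exact: (epsilon_spec (inhabits (0:K)) (fun l' => scale l m = scale l' m) (ex_intro _ l erefl)).
split.
  exists (fun x y => scale (coef x + coef y) m) => u /uq [t [t0 ->]] r s.
  by rewrite !Hss !coefE mulrDl.
move=> add Hadd.
have addE : forall r s, add (scale r m) (scale s m) = scale (r + s) m.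
  by move=> r s; rewrite Hadd.
split; last first.
  exists m; split; first by rewrite -(H1 m); apply: Cm.
  move=> x /HC [l ->]; exists l; split=> // l' /Hinj; done.
split; first by move=> x y /HC [r ->] /HC [s ->]; rewrite addE.
split; first by move=> a x /HC [r ->]; rewrite Hss.
split; first by move=> x y z /HC [r ->] /HC [s ->] /HC [t ->]; rewrite !addE addrA.
split; first by move=> x y /HC [r ->] /HC [s ->]; rewrite !addE addrC.
split.
  exists (scale 0 m); split; first exact: Cm.
    by move=> x /HC [r ->]; rewrite addE add0r.
  by move=> x /HC [r ->]; exists (scale (- r) m); split; [apply: Cm | rewrite addE subrr].
split; first by move=> x _; rewrite H1.
split; first by move=> a b x _; rewrite Hss.
split; first by move=> a x y /HC [r ->] /HC [s ->]; rewrite !addE !Hss mulrDr.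
by move=> a b x /HC [r ->]; rewrite !Hss addE mulrDl.
Qed.

Theorem proposition3p9 (K : fieldType) (Q : Type) (mul : Q -> Q -> Q) (one : Q)
    (scale : K -> Q -> Q) (HQ : quantity_space mul one scale) (c : Q) :
  (exists add : Q -> Q -> Q, class_add_spec scale (qclass scale c) add) /\
  (forall add : Q -> Q -> Q, class_add_spec scale (qclass scale c) add ->
     vector_space_on scale (qclass scale c) add /\
     one_dimensional_on scale (qclass scale c)).
Proof.
case: HQ => [[_ [_ [_ [H1 [Hss _]]]]] _ [n [e [einv [_ Huniq]]]]].
set P := fun k : {ffun 'I_n -> int} => \big[mul/one]_(i < n) zpow mul one (e i) (einv i) (k i).
have uq : forall (l l' : K) k k', scale l (P k) = scale l' (P k') -> l = l' /\ k = k'.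
  move=> l l' k k' E.
  have [p [_ Hp]] := Huniq (scale l (P k)).
  have e1 := Hp (l, k) erefl.
  have e2 := Hp (l', k') E.
  by rewrite e1 in e2; case: e2 => -> ->.
have [[mu kc] [Ec _]] := Huniq c; rewrite /= in Ec.
apply: (@core K Q scale (P kc) Hss H1).
  by move=> l l' /uq [].
move=> x; split.
  case=> a [b E].
  have [[nu kx] [Ex _]] := Huniq x; rewrite /= in Ex.
  rewrite Ex Ec !Hss in E.
  have [_ ekx] := uq _ _ _ _ E.
  by exists nu; rewrite Ex ekx.
case=> l ->; exists 0, 0.
by rewrite Ec !Hss !mul0r.
Qed.
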